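(* Let $G$ be a finite additive abelian group of order $v$ and suppose there exists a difference family DF$(v,k,\lambda)$ over $G$ (with $2\le k\le v$). Then there exists an authentication system with $k$ source states, $v$ messages and $b=\lambda v(v-1)/(k^2-k)$ encoding rules which, when the source states are equiprobable and the encoding rules are used with equal probability, has perfect secrecy and is onefold secure against spoofing. Moreover, the system is optimal (i.e. $b=v(v-1)/(k(k-1))$) if and only if $\lambda=1$.
   Context: A difference family DF$(v,k,\lambda)$ over an additive abelian group $G$ of order $v$ is a family $\{D_1,\dots,D_l\}$ of $k$-subsets of $G$ such that the multiset $\bigcup_{i=1}^l\{x-y: x,y\in D_i,\ x\ne y\}$ contains every nonzero element of $G$ exactly $\lambda$ times. Authentication system: finite sets $\mathcal{S}$ of $k$ source states, $\mathcal{M}$ of $v$ messages, $\mathcal{E}$ of $b$ encoding rules, each $e\in\mathcal{E}$ an injective map $\mathcal{S}\to\mathcal{M}$; $M(e)=\{e(s):s\in\mathcal{S}\}$ is the set of messages valid (accepted) under $e$. A key $e$ is drawn according to a distribution $p_E$ on $\mathcal{E}$, source states according to $p_S$, independently; ''equiprobable source states'' means source states are independent and uniformly distributed, and for each $i$ every $i$-subset of distinct source states is equally likely to be the set of sent source states. Perfect secrecy: $p_S(s\mid m)=p_S(s)$ for every $s\in\mathcal{S}$ and every message $m$. Spoofing attack of order $i$: the opponent observes $i\ge 0$ distinct messages produced from $i$ distinct source states under the same secret key $e$, and then sends a new message distinct from these; he succeeds if it lies in $M(e)$. The deception probability $P_{d_i}$ is the maximum success probability over all opponent strategies. The system is called $t$-fold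 secure against spoofing if $P_{d_i}=(k-i)/(v-i)$ for all $0\le i\le t$. A onefold secure system always has $b\ge \binom{v}{2}/\binom{k}{2}$; it is called optimal when equality holds. *)

(* Defs.v *)
From HB Require Import structures.
From mathcomp Require Import all_boot all_order all_algebra.
Set Implicit Arguments. Unset Strict Implicit. Unset Printing Implicit Defensive.
Import Order.TTheory GRing.Theory Num.Theory.
Local Open Scope ring_scope.

Definition diff_count (G : finZmodType) (D : {set G}) (g : G) : nat :=
  #|[set xy in setX D D | (xy.1 != xy.2) && (xy.1 - xy.2 == g)]|.

Definition is_DF (G : finZmodType) (F : seq {set G}) (k lambda : nat) : Prop :=
  (forall D, D \in F -> #|D| = k) /\
  (forall g : G, g != 0 -> (\sum_(D <- F) diff_count D g)%N = lambda).

Definition uniform (T : finType) : T -> rat := fun _ => 1 / (#|T|%:R).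
Arguments uniform T _ : clear implicits.

Section Auth.
Variables (S M E : finType) (enc : E -> S -> M).

Definition auth_system : Prop := forall e, injective (enc e).

Definition valid (e : E) : {set M} := [set enc e s | s in S].

Definition probM (pE : E -> rat) (pS : S -> rat) (m : M) : rat :=
  \sum_(e : E) \sum_(s : S) (if enc e s == m then pE e * pS s else 0).

Definition probSM (pE : E -> rat) (pS : S -> rat) (s : S) (m : M) : rat :=
  \sum_(e : E) (if enc e s == m then pE e * pS s else 0).

Definition perfect_secrecy (pE : E -> rat) (pS : S -> rat) : Prop :=
  forall s m, probM pE pS m != 0 -> probSM pE pS s m / probM pE pS m = pS s.

(* A spoofing strategy of order i: from the observed set of i messages,
   choose a new message not among them. *)
Definition admissible (i : nat) (f : {set M} -> M) : Prop :=
  forall X : {set M}, #|X| = i -> f X \notin X.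

(* success probability of strategy f of order i, key ~ pE, the set of sent
   source states uniformly distributed among the i-subsets of S *)
Definition spoof_success (pE : E -> rat) (i : nat) (f : {set M} -> M) : rat :=
  \sum_(e : E) pE e *
    ((\sum_(T : {set S} | #|T| == i) ((f (enc e @: T) \in valid e) : nat)%:R)
       / ('C(#|S|, i))%:R).

Definition deception_prob (pE : E -> rat) (i : nat) (p : rat) : Prop :=
  (exists f, admissible i f /\ spoof_success pE i f = p) /\
  (forall f, admissible i f -> spoof_success pE i f <= p).

Definition t_fold_secure (pE : E -> rat) (t : nat) : Prop :=
  forall i : nat, (i <= t)%N ->
    deception_prob pE i ((#|S| - i)%:R / (#|M| - i)%:R).

Definition optimal : Prop := (#|E| * 'C(#|S|, 2) = 'C(#|M|, 2))%N.

End Auth.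

(* Main.v *)
Require Import Defs.
From HB Require Import structures.
From mathcomp Require Import all_boot all_order all_algebra.
From mathcomp Require Import zify ring.
Import Order.TTheory GRing.Theory Num.Theory.
Local Open Scope ring_scope.

Lemma sum_nat_bool (T : finType) (P : pred T) :
  (\sum_(x : T) (P x : nat))%N = #|[set x | P x]|.
Proof.
rewrite -sum1dep_card [RHS]big_mkcond; apply: eq_bigr => x _; by case: (P x).
Qed.

Lemma card_fib (T U : finType) (A : {set T}) (f : T -> U) :
  (\sum_(u : U) #|[set x in A | f x == u]|)%N = #|A|.
Proof.
rewrite -sum1_card (partition_big f predT) //; apply: eq_bigr => u _.
by rewrite -sum1dep_card.
Qed.

Lemma diff_count0 (G : finZmodType) (D : {set G}) : diff_count D 0 = 0%N.
Proof.
apply/eqP; rewrite cards_eq0; apply/eqP/setP => -[x y]; rewrite !inE /=.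
by rewrite subr_eq0 andNb andbF.
Qed.

Lemma sum_diff (G : finZmodType) (D : {set G}) :
  (\sum_(g : G) diff_count D g)%N = (#|D| * #|D| - #|D|)%N.
Proof.
set B := [set xy in setX D D | xy.1 != xy.2].
have -> : (\sum_(g : G) diff_count D g = \sum_(g : G) #|[set xy in B | (xy.1 - xy.2)%R == g]|)%N.
  apply: eq_bigr => g _; apply: eq_card => -[x y]; by rewrite !inE andbA.
rewrite card_fib.
have := cardsID [set xy : G * G | xy.1 == xy.2] (setX D D).
rewrite cardsX.
have -> : setX D D :\: [set xy : G * G | xy.1 == xy.2] = B.
  by apply/setP => -[x y]; rewrite !inE andbC.
have -> : setX D D :&: [set xy : G * G | xy.1 == xy.2] = (fun x => (x, x)) @: D.
  apply/setP => -[x y]; rewrite !inE /=; apply/idP/imsetP.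
    by move=> /andP[/andP[hx _] /eqP <-]; exists x.
  by move=> [z hz [-> ->]]; rewrite hz eqxx.
rewrite card_imset; last by move=> a b [].
lia.
Qed.
Lemma sumg_in (G : finZmodType) (D : {set G}) m :
  (\sum_(g : G) ((m - g)%R \in D : nat))%N = #|D|.
Proof.
rewrite (reindex_inj (subrI m)) /=.
under eq_bigr do rewrite subKr.
by rewrite sum_nat_bool; apply: eq_card => x; rewrite inE.
Qed.

Lemma sum_pair (G : finZmodType) (D : {set G}) m m' : m != m' ->
  (\sum_(g : G) (((m - g)%R \in D) && ((m' - g)%R \in D) : nat))%N = diff_count D (m - m').
Proof.
move=> neq; rewrite sum_nat_bool /diff_count.
rewrite -(card_imset _ (f := fun g => (m - g, m' - g))); last first.
  by move=> a b [] /subrI.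
apply: eq_card => -[x y]; rewrite !inE /=.
apply/imsetP/idP => [[g]|].
  rewrite inE => /andP[hx hy] [-> ->]; rewrite hx hy /=.
  rewrite opprB subrKA eqxx andbT.
  apply: contra neq => /eqP /addIr ->; by [].
move=> /andP[/andP[hx hy] /andP[_ /eqP hxy]].
have ey : m' - (m - x) = y by rewrite opprB addrCA -opprB -hxy subKr.
exists (m - x); first by rewrite inE subKr hx /= ey.
by rewrite subKr ey.
Qed.
Section Constr.
Variables (G : finZmodType) (k : nat) (F : seq {set G}).
Hypothesis HF : forall D, D \in F -> #|D| = k.

Definition Dj (j : 'I_(size F)) := nth set0 F j.
Definition dj (j : 'I_(size F)) (s : 'I_k) : G := nth 0 (enum (Dj j)) s.
Definition encF (e : 'I_(size F) * G) (s : 'I_k) : G := e.2 + dj e.1 s.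

Lemma card_Dj j : #|Dj j| = k.
Proof. by apply: HF; rewrite /Dj mem_nth. Qed.

Lemma size_enum_Dj j : size (enum (Dj j)) = k.
Proof. by rewrite -cardE card_Dj. Qed.

Lemma encF_inj e : injective (encF e).
Proof.
move=> s t; rewrite /encF => /addrI; rewrite /dj => /eqP.
rewrite nth_uniq ?size_enum_Dj ?enum_uniq //.
  by move/eqP => st; apply: val_inj.
Qed.

Lemma encF_eq e s m : (encF e s == m) = (dj e.1 s == m - e.2).
Proof. by rewrite /encF eq_sym [RHS]eq_sym subr_eq [in RHS]addrC. Qed.

Lemma cnt_s e m : (\sum_(s < k) (encF e s == m : nat))%N = ((m - e.2) \in Dj e.1 : nat).
Proof.
under eq_bigr do rewrite encF_eq.
set x := m - e.2.
rewrite -mem_enum -(count_uniq_mem x (enum_uniq (Dj e.1))) -sum1_count.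
rewrite (big_nth 0) size_enum_Dj big_mkord [RHS]big_mkcond /=.
by apply: eq_bigr => i _; rewrite /dj; case: (_ == _).
Qed.

Lemma valid_mem e m : (m \in valid encF e) = (m - e.2 \in Dj e.1).
Proof.
apply/imsetP/idP => [[s _ ->]|].
  by rewrite /encF [_ + dj _ _]addrC addrK /dj -mem_enum mem_nth ?size_enum_Dj.
rewrite -mem_enum => hm.
have hi : (index (m - e.2)%R (enum (Dj e.1)) < k)%N by rewrite -(size_enum_Dj e.1) index_mem.
exists (Ordinal hi) => //.
by rewrite /encF /dj /= nth_index // addrC subrK.
Qed.


Variable lam : nat.
Hypothesis Hlam : forall g : G, g != 0 -> (\sum_(D <- F) diff_count D g)%N = lam.

Lemma DF_ord g : g != 0 -> (\sum_(j < size F) diff_count (Dj j) g)%N = lam.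
Proof. by move=> /Hlam <-; rewrite (big_nth set0) big_mkord. Qed.

Lemma Hl : (size F * (k * k - k) = lam * (#|G| - 1))%N.
Proof.
have e1 : (\sum_(g : G | g != 0%R) \sum_(j < size F) diff_count (Dj j) g = lam * (#|G| - 1))%N.
  rewrite (eq_bigr (fun _ => lam)); last by move=> g /DF_ord.
  rewrite sum_nat_const mulnC; congr (_ * _)%N.
  rewrite subn1 -(cardC1 (0 : G)); apply: eq_card => x; by rewrite !inE.
rewrite -e1 exchange_big /= -[X in (X * _)%N]card_ord -sum_nat_const.
apply: eq_bigr => j _.
by rewrite -(card_Dj j) -sum_diff (bigD1 (0:G)) //= diff_count0.
Qed.

Lemma N3 m : (\sum_(e : 'I_(size F) * G) (m \in valid encF e : nat))%N = (size F * k)%N.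
Proof.
under eq_bigr do rewrite valid_mem.
rewrite -(pair_big predT predT (fun j g => ((m - g)%R \in Dj j : nat))) /=.
under eq_bigr do rewrite sumg_in card_Dj.
by rewrite sum_nat_const card_ord.
Qed.

Lemma N1 m : (\sum_(e : 'I_(size F) * G) \sum_(s < k) (encF e s == m : nat))%N = (size F * k)%N.
Proof. rewrite -(N3 m); apply: eq_bigr => e _; by rewrite cnt_s valid_mem. Qed.

Lemma N2 s m : (\sum_(e : 'I_(size F) * G) (encF e s == m : nat))%N = size F.
Proof.
rewrite -(pair_big predT predT (fun j g => (encF (j, g) s == m : nat))) /=.
rewrite -[RHS]mul1n -[in RHS](card_ord (size F)) mulnC -sum_nat_const.
apply: eq_bigr => j _.
under eq_bigr do rewrite /encF /= eq_sym -subr_eq eq_sym.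
rewrite (bigD1 (m - dj j s)) //= eqxx big1 // => g /negbTE.
by rewrite eq_sym => ->.
Qed.

Lemma N4 m m' : m != m' ->
  (\sum_(e : 'I_(size F) * G) ((m \in valid encF e) && (m' \in valid encF e) : nat))%N = lam.
Proof.
move=> neq.
under eq_bigr do rewrite !valid_mem.
rewrite -(pair_big predT predT (fun j g => (((m - g)%R \in Dj j) && ((m' - g)%R \in Dj j) : nat))) /=.
under eq_bigr do rewrite sum_pair //.
by apply: DF_ord; rewrite subr_eq0.
Qed.

Lemma N5 (f : {set G} -> G) : (forall X : {set G}, #|X| = 1%N -> f X \notin X) ->
  (\sum_(e : 'I_(size F) * G) \sum_(s < k) (f [set encF e s] \in valid encF e : nat))%N
    = (#|G| * lam)%N.
Proof.
move=> adm.
rewrite (eq_bigr (fun e => \sum_(m : G) ((m \in valid encF e) && (f [set m] \in valid encF e) : nat))%N).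
  rewrite exchange_big /= (eq_bigr (fun _ => lam)); first by rewrite sum_nat_const.
  move=> m _; apply: N4.
  by have := adm [set m] (cards1 m); rewrite inE eq_sym.
move=> e _.
transitivity (\sum_(s < k) \sum_(m : G) ((encF e s == m) * (f [set m] \in valid encF e)))%N.
  apply: eq_bigr => s _; rewrite (bigD1 (encF e s)) //= eqxx mul1n big1 ?addn0 // => m.
  by rewrite eq_sym => /negbTE ->.
rewrite exchange_big /=; apply: eq_bigr => m _.
by rewrite -big_distrl /= cnt_s -valid_mem mulnb.
Qed.

End Constr.
Lemma sum_if (T : finType) (P : pred T) (c : rat) :
  \sum_(x : T) (if P x then c else 0) = ((\sum_(x : T) (P x : nat))%N)%:R * c.
Proof.
rewrite natr_sum mulr_suml; apply: eq_bigr => x _.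
by case: (P x); rewrite ?mul1r ?mul0r.
Qed.

Lemma sum_natr_mul (T : finType) (n : T -> nat) (c : rat) :
  \sum_(x : T) (n x)%:R * c = ((\sum_(x : T) n x)%N)%:R * c.
Proof. by rewrite natr_sum mulr_suml. Qed.

Lemma sum_if2 (T U : finType) (P : T -> pred U) (c : rat) :
  \sum_(x : T) \sum_(y : U) (if P x y then c else 0) =
  ((\sum_(x : T) \sum_(y : U) (P x y : nat))%N)%:R * c.
Proof. by rewrite -sum_natr_mul; apply: eq_bigr => x _; rewrite sum_if. Qed.

Lemma sum_card0 (T : finType) (h : {set T} -> rat) :
  \sum_(X : {set T} | #|X| == 0%N) h X = h set0.
Proof. by apply: big_pred1 => X /=; rewrite cards_eq0. Qed.

Lemma sum_card1 (T : finType) (h : {set T} -> rat) :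
  \sum_(X : {set T} | #|X| == 1%N) h X = \sum_(x : T) h [set x].
Proof.
rewrite -(big_imset h (h := set1) (A := predT)); last by move=> a b _ _ /set1_inj.
apply: eq_bigl => X; apply/cards1P/imsetP => [[x ->]|[x _ ->]]; by exists x.
Qed.

Theorem mainTheorem3 (G : finZmodType) (k lambda : nat) (F : seq {set G}) :
  (2 <= k)%N -> (k <= #|G|)%N -> (0 < lambda)%N -> is_DF F k lambda ->
  exists (S M E : finType) (enc : E -> S -> M),
    auth_system enc /\ #|S| = k /\ #|M| = #|G| /\
    (#|E| * (k * k - k) = lambda * (#|G| * (#|G| - 1)))%N /\
    perfect_secrecy enc (uniform E) (uniform S) /\
    t_fold_secure enc (uniform E) 1 /\
    (optimal S M E <-> lambda = 1%N).
Proof.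
move=> k2 kv lam0 [HF Hlam].
have hl := @Hl G k F HF lambda Hlam.
have v2 : (2 <= #|G|)%N by apply: leq_trans kv.
have l0 : (0 < size F)%N.
  rewrite lt0n; apply/eqP => l0; move: hl; rewrite l0 mul0n => /esym/eqP.
  rewrite muln_eq0 => /orP[]; lia.
have cE : #|{: 'I_(size F) * G}| = (size F * #|G|)%N by rewrite card_prod card_ord.
exists 'I_k, G, ('I_(size F) * G)%type, (@encF G k F).
split; first exact: encF_inj.
split; first exact: card_ord.
split; first by [].
split; first by rewrite cE -mulnA [(#|G| * _)%N]mulnC mulnA hl; lia.
have k0 : (k%:R : rat) != 0 by rewrite pnatr_eq0; lia.
have l0r : ((size F)%:R : rat) != 0 by rewrite pnatr_eq0; lia.
have v0 : (#|G|%:R : rat) != 0 by rewrite pnatr_eq0; lia.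
split.
  move=> s m _; rewrite /probSM /probM /uniform.
  rewrite sum_if2 sum_if N1 // N2 card_ord cE !natrM.
  field.
  by rewrite l0r k0 v0.
split.
  move=> i; case: i => [_|[_|//]].
    have key : forall f : {set G} -> G,
        spoof_success (@encF G k F) (uniform _) 0 f = k%:R / #|G|%:R.
      move=> f; rewrite /spoof_success /uniform.
      under eq_bigr do rewrite sum_card0 imset0 bin0 divr1.
      rewrite -mulr_sumr -natr_sum N3 // cE !natrM.
      field; by rewrite l0r v0.
    rewrite card_ord !subn0; split.
      exists (fun _ => 0); split; last exact: key.
      by move=> X /eqP; rewrite cards_eq0 => /eqP ->; rewrite inE.
    by move=> f _; rewrite key.
  have key : forall f : {set G} -> G, admissible 1 f ->
      spoof_success (@encF G k F) (uniform _) 1 f = (k - 1)%:R / (#|G| - 1)%:R.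
    move=> f adm; rewrite /spoof_success /uniform card_ord.
    under eq_bigr do rewrite sum_card1 bin1 -natr_sum.
    rewrite (eq_bigr (fun e => ((\sum_(s < k) (f [set encF G k F e s] \in valid (encF G k F) e : nat))%N)%:R
                          * (1 / #|{: 'I_(size F) * G}|%:R / k%:R))); last first.
      move=> e _; under eq_bigr do rewrite imset_set1.
      by rewrite !mul1r mulrCA.
    rewrite sum_natr_mul (@N5 G k F HF lambda Hlam); last exact: adm.
    have hlr : (lambda%:R : rat) = (size F)%:R * (k%:R * k%:R - k%:R) / (#|G|%:R - 1).
      have : (((size F * (k * k - k))%N)%:R : rat) = ((lambda * (#|G| - 1))%N)%:R by rewrite hl.
      rewrite natrM natrB; last by rewrite leq_pmull; lia.
      rewrite !natrM natrB; last lia.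
      move=> ->; field.
      rewrite subr_eq0 pnatr_eq1; by apply/eqP => h; move: v2; rewrite h.
    rewrite cE !natrM hlr !natrB //; try lia.
    field.
    rewrite l0r k0 v0 subr_eq0 pnatr_eq1 /= andbT; by apply/eqP => h; move: v2; rewrite h.
  rewrite card_ord; split; last by move=> f /key ->.
  have /card_gt0P [x1 hx1] : (0%N < #|predC1 (0%R:G)|)%N by rewrite cardC1 -subn1 subn_gt0.
  have adm : admissible 1 (fun X : {set G} => if (0:G) \in X then x1 else 0).
    move=> X /eqP/cards1P [y ->]; rewrite !inE.
    case: (eqVneq 0 y) => [<-|ny]; first by rewrite inE in hx1.
    exact: ny.
  by exists (fun X : {set G} => if (0:G) \in X then x1 else 0); split; last exact: key.
rewrite /optimal cE card_ord.
have bk : ('C(k, 2) * 2 = k * k.-1)%N by rewrite bin_ffact ffactnS ffactn1.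
have bv : ('C(#|G|, 2) * 2 = #|G| * #|G|.-1)%N by rewrite bin_ffact ffactnS ffactn1.
have e : (size F * #|G| * 'C(k, 2) = lambda * 'C(#|G|, 2))%N.
  apply/eqP; rewrite -(eqn_pmul2r (_ : 0 < 2)%N) // -!mulnA bk bv.
  apply/eqP; nia.
have B0 : (0 < 'C(#|G|, 2))%N by rewrite bin_gt0.
rewrite e; split => [h|->]; last by rewrite mul1n.
by apply/eqP; rewrite -(eqn_pmul2r B0) mul1n h.
Qed.
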